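(* Let $(\mu_z^\varepsilon)$ be a time-analytic local random walk on $\mathcal G$. Then for every pair of distinct vertices $x,y$ the continuous-time Ollivier–Ricci curvature ${}^{\mathcal O}\mathrm{Ric}(x,y)=\lim_{\varepsilon\downarrow0}\varepsilon^{-1}\,{}^{\mathcal O}\mathrm{Ric}_\varepsilon(x,y)$ exists and is finite.
   Context: $\mathcal G$ is a locally finite graph with vertex set $V$, $\mathrm d$ a distance on $V$ with $(V,\mathrm d)$ complete. A random walk is a family of probability measures $\mu_z^\varepsilon$ on $V$ ($z\in V$, $\varepsilon\in[0,1]$) with finite first moments, continuous in $\varepsilon$, $\mu_z^0=\delta_z$. It is local if for each $z$ there is a finite set $\mathcal K_z$ with $\mathrm{supp}(\mu_z^\varepsilon)\subset\mathcal K_z$ for all $\varepsilon$. It is time-analytic if for all $x,y$, $\varepsilon\mapsto\mu_x^\varepsilon(y)$ is analytic and admits an analytic continuation to $(-\delta_{xy},1+\delta_{xy})$ for some $\delta_{xy}>0$. ${}^{\mathcal O}\mathrm{Ric}_\varepsilon(x,y):=1-\mathcal W_1(\mu_x^\varepsilon,\mu_y^\varepsilon)/\mathrm d(x,y)$, with $\mathcal W_1$ the $L^1$-Wasserstein distance w.r.t. $\mathrm d$. *)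

(* Defs.v *)
From HB Require Import structures.
From mathcomp Require Import all_boot all_order all_algebra.
From mathcomp Require Import all_classical all_reals all_analysis.
Set Implicit Arguments. Unset Strict Implicit. Unset Printing Implicit Defensive.
Import Order.TTheory GRing.Theory Num.Theory.
Import numFieldNormedType.Exports.
Local Open Scope classical_set_scope.
Local Open Scope ring_scope.

Section Defs.
Variables (R : realType) (V : choiceType).

Definition locally_finite_graph (E : V -> V -> Prop) : Prop :=
  (forall x y, E x y -> E y x) /\ (forall x, ~ E x x) /\
  (forall x, finite_set [set y | E x y]).

Definition is_distance (d : V -> V -> R) : Prop :=
  (forall x y, 0 <= d x y) /\ (forall x y, d x y = 0 <-> x = y) /\
  (forall x y, d x y = d y x) /\ (forall x y z, d x z <= d x y + d y z).

Definition d_cauchy (d : V -> V -> R) (u : nat -> V) : Prop :=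
  forall e : R, 0 < e -> exists N : nat,
    forall m n : nat, (N <= m)%N -> (N <= n)%N -> d (u m) (u n) < e.

Definition d_complete (d : V -> V -> R) : Prop :=
  forall u : nat -> V, d_cauchy d u ->
    exists l : V, (fun n => d (u n) l) @ \oo --> (0 : R).

Definition prob_measure (m : V -> R) : Prop :=
  (forall v, 0 <= m v) /\ (\esum_(v in [set: V]) (m v)%:E = 1%E).

Definition finite_first_moment (d : V -> V -> R) (m : V -> R) : Prop :=
  exists z : V, (\esum_(v in [set: V]) (d z v * m v)%:E < +oo)%E.

(* mu z eps y = mu_z^eps(y); only eps in [0,1] is relevant *)
Definition random_walk (d : V -> V -> R) (mu : V -> R -> V -> R) : Prop :=
  forall z : V,
    (forall eps : R, 0 <= eps <= 1 ->
       prob_measure (mu z eps) /\ finite_first_moment d (mu z eps)) /\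
    (forall y : V, {within `[0, 1], continuous (fun eps => mu z eps y)}) /\
    (forall y : V, mu z 0 y = if y == z then 1 else 0).

Definition local_walk (mu : V -> R -> V -> R) : Prop :=
  forall z : V, exists K : set V, finite_set K /\
    forall eps : R, 0 <= eps <= 1 -> forall y : V, mu z eps y != 0 -> K y.

Definition real_analytic_on (I : set R) (f : R -> R) : Prop :=
  forall t0, I t0 -> exists r : R, 0 < r /\ exists a : nat -> R,
    forall t, `|t - t0| < r ->
      (fun N : nat => \sum_(0 <= n < N) a n * (t - t0) ^+ n) @ \oo --> f t.

Definition time_analytic (mu : V -> R -> V -> R) : Prop :=
  forall x y : V, exists delta : R, 0 < delta /\ exists f : R -> R,
    real_analytic_on [set t | - delta < t < 1 + delta] f /\
    forall eps : R, 0 <= eps <= 1 -> f eps = mu x eps y.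

Definition is_coupling (m n : V -> R) (p : V -> V -> R) : Prop :=
  (forall a b, 0 <= p a b) /\
  (forall a, \esum_(b in [set: V]) (p a b)%:E = (m a)%:E) /\
  (forall b, \esum_(a in [set: V]) (p a b)%:E = (n b)%:E).

Definition transport_cost (d : V -> V -> R) (p : V -> V -> R) : \bar R :=
  \esum_(ab in [set: V * V]) (d ab.1 ab.2 * p ab.1 ab.2)%:E.

Definition W1 (d : V -> V -> R) (m n : V -> R) : \bar R :=
  ereal_inf [set transport_cost d p | p in [set p | is_coupling m n p]].

(* Ollivier-Ricci curvature Ric_eps(x,y) = 1 - W1(mu_x^eps, mu_y^eps)/d(x,y)
   (W1 is finite for measures with finite first moments) *)
Definition ORic_eps (d : V -> V -> R) (mu : V -> R -> V -> R) (eps : R)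
    (x y : V) : R :=
  1 - fine (W1 d (mu x eps) (mu y eps)) / d x y.

End Defs.

(* Main.v *)
Require Import Defs.
From HB Require Import structures.
From mathcomp Require Import all_boot all_order all_algebra.
From mathcomp Require Import all_classical all_reals all_analysis.
From mathcomp Require Import ring lra.
Import Order.TTheory GRing.Theory Num.Theory.
Import numFieldNormedType.Exports.
Local Open Scope classical_set_scope.
Local Open Scope ring_scope.
Set Implicit Arguments. Unset Strict Implicit. Unset Printing Implicit Defensive.

Lemma geom_bound (R : realType) (q : R) m : 0 <= q -> q <= 1/2 ->
  \sum_(n < m) q ^+ n <= 2 - 2 * q ^+ m.
Proof.
move=> q0 q1; elim: m => [|m IH]; first by rewrite big_ord0 expr0; lra.
rewrite big_ord_recl expr0 /=.
under eq_bigr do rewrite /bump /= add1n exprS.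
rewrite -mulr_sumr exprS.
have hq : 0 <= q ^+ m by apply: exprn_ge0.
nra.
Qed.

Lemma seq_bnd (R : realType) (u : nat -> R) (l : R) : u @ \oo --> l ->
  exists2 B, 0 < B & forall n, `|u n| <= B.
Proof.
move=> h; have : cvgn u by apply/cvg_ex; exists l.
move=> /cvg_seq_bounded/pinfty_ex_gt0[M M_gt0 /= uM].
by exists M => // n; apply: uM.
Qed.

Lemma series_bound (R : realType) (f : R -> R) (r : R) (a : nat -> R) :
  0 < r ->
  (forall t, `|t - 0| < r ->
     (fun N : nat => \sum_(0 <= n < N) a n * (t - 0) ^+ n) @ \oo --> f t) ->
  exists2 tau, 0 < tau & exists K, forall t, 0 <= t <= tau ->
    `|f t - a 0%N - a 1%N * t| <= K * t ^+ 2.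
Proof.
move=> r0 hf.
set rho := r / 2.
have rho0 : 0 < rho by rewrite /rho; lra.
have hr : `|rho - 0| < r by rewrite subr0 gtr0_norm //; rewrite /rho; lra.
have [B B0 hB] := seq_bnd (hf _ hr).
have hterm : forall n, `|a n * rho ^+ n| <= 2 * B.
  move=> n; have h1 := hB n; have h2 := hB n.+1.
  rewrite big_nat_recr //= in h2.
  have -> : a n * rho ^+ n = (\sum_(0 <= i < n) a i * (rho - 0) ^+ i
     + a n * (rho - 0) ^+ n) - \sum_(0 <= i < n) a i * (rho - 0) ^+ i.
    by rewrite subr0; ring.
  apply: (le_trans (ler_normB _ _)); lra.
exists (rho / 2); first lra.
exists (4 * B / rho ^+ 2) => t /andP[t0 trho].
set q := t / rho.
have q0 : 0 <= q by rewrite /q divr_ge0 // ltW.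
have q1 : q <= 1 / 2.
  rewrite /q ler_pdivrMr //; lra.
have tq : t = q * rho by rewrite /q divfK // gt_eqF.
have bnd : forall m, `|\sum_(0 <= n < m.+2) a n * (t - 0) ^+ n - a 0%N - a 1%N * t|
                      <= 4 * B * q ^+ 2.
  move=> m.
  rewrite big_nat_recl // big_nat_recl // subr0 expr0 expr1 mulr1.
  have -> : a 0%N + (a 1%N * t + \sum_(0 <= i < m) a i.+2 * t ^+ i.+2)
     - a 0%N - a 1%N * t = \sum_(0 <= i < m) a i.+2 * t ^+ i.+2 by ring.
  rewrite big_mkord.
  apply: (le_trans (ler_norm_sum _ _ _)).
  apply: (@le_trans _ _ (\sum_(i < m) 2 * B * q ^+ 2 * q ^+ i)).
    apply: ler_sum => i _.
    rewrite tq exprMn (mulrC (q ^+ _)) mulrA normrM (ger0_norm (exprn_ge0 _ q0)).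
    rewrite -mulrA -exprD addnC addn2.
    by apply: ler_wpM2r; [apply: exprn_ge0|apply: hterm].
  rewrite -mulr_sumr.
  have hg := geom_bound m q0 q1.
  have hqm : 0 <= q ^+ m by apply: exprn_ge0.
  have hq2 : 0 <= 2 * B * q ^+ 2 by rewrite mulr_ge0 ?exprn_ge0 // mulr_ge0 // ltW.
  have : 2 * B * q ^+ 2 * \sum_(i < m) q ^+ i <= 2 * B * q ^+ 2 * 2.
    by apply: ler_wpM2l => //; lra.
  lra.
have ht : `|t - 0| < r by rewrite subr0 ger0_norm //; rewrite /rho in trho; lra.
have lim1 := hf t ht.
have : `|f t - a 0%N - a 1%N * t| <= 4 * B * q ^+ 2.
  have L1 : (fun N : nat => `|\sum_(0 <= n < N) a n * (t - 0) ^+ n - a 0%N - a 1%N * t|)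
     @ \oo --> `|f t - a 0%N - a 1%N * t|.
    apply: cvg_norm; apply: cvgB; first apply: cvgB.
    - exact: lim1.
    - exact: cvg_cst.
    - exact: cvg_cst.
  apply: (ler_cvg_to L1 (cvg_cst _)).
  near=> N.
  have hN : (2 <= N)%N by near: N; exists 2%N.
  by rewrite -(subnK hN) addn2; apply: bnd.
move=> h; apply: (le_trans h); rewrite /q expr_div_n.
by rewrite le_eqVlt; apply/orP; left; apply/eqP; ring.
Unshelve. all: end_near.
Qed.

Lemma sumr_ge0_seq (R : numDomainType) (T : eqType) (r : seq T) (F : T -> R) :
  (forall i, i \in r -> 0 <= F i) -> 0 <= \sum_(i <- r) F i.
Proof. by move=> h; rewrite big_seq; apply: sumr_ge0. Qed.

Lemma ler_sum_seq (R : numDomainType) (T : eqType) (r : seq T) (F G : T -> R) :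
  (forall i, i \in r -> F i <= G i) -> \sum_(i <- r) F i <= \sum_(i <- r) G i.
Proof. by move=> h; rewrite big_seq [X in _ <= X]big_seq; apply: ler_sum. Qed.

Section Fin.
Variables (R : realType).

Lemma esum_seq (T : choiceType) (r : seq T) (f : T -> R) : uniq r ->
  (forall v, 0 <= f v) -> (forall v, v \notin r -> f v = 0) ->
  \esum_(v in [set: T]) (f v)%:E = (\sum_(v <- r) f v)%:E.
Proof.
move=> ur f0 fs.
have -> : \esum_(v in [set: T]) (f v)%:E = \esum_(v in [set` r]) (f v)%:E.
  rewrite [RHS]esum_mkcond; apply: eq_esum => v _.
  case: ifPn => //; rewrite mem_setE => vr.
  by rewrite fs.
rewrite esum_fset; last 2 first.
- exact: finite_seq.
- by move=> i _; rewrite lee_fin.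
by rewrite -fsbig_seq // sumEFin.
Qed.

Lemma esum_term (T : choiceType) (f : T -> R) v :
  (forall v, 0 <= f v) -> ((f v)%:E <= \esum_(u in [set: T]) (f u)%:E)%E.
Proof.
move=> f0; apply: esum_ge; exists [set v].
  by split => //; exact: finite_set1.
by rewrite fsbig_set1.
Qed.


Definition fcoup (V : choiceType) (s : seq V) (m n : V -> R) (p : V -> V -> R) :=
  [/\ forall a b, a \in s -> b \in s -> 0 <= p a b,
      forall a, a \in s -> \sum_(b <- s) p a b = m a &
      forall b, b \in s -> \sum_(a <- s) p a b = n b].

Definition fcost (V : choiceType) (c : V -> V -> R) (s : seq V) (p : V -> V -> R) :=
  \sum_(a <- s) \sum_(b <- s) c a b * p a b.

Definition pmeas (V : choiceType) (s : seq V) (m : V -> R) :=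
  [/\ forall v, 0 <= m v, forall v, v \notin s -> m v = 0 & \sum_(v <- s) m v = 1].

Definition ext (V : choiceType) (s : seq V) (p : V -> V -> R) a b :=
  if (a \in s) && (b \in s) then p a b else 0.

Variables (V : choiceType) (d : V -> V -> R) (s : seq V).
Hypothesis us : uniq s.
Hypothesis d0 : forall a b, 0 <= d a b.

Lemma cost_seq (p : V -> V -> R) : (forall a b, 0 <= p a b) ->
  (forall a b, (a \notin s) || (b \notin s) -> p a b = 0) ->
  transport_cost d p = (fcost d s p)%:E.
Proof.
move=> p0 ps.
rewrite /transport_cost (@esum_seq _ [seq (a, b) | a <- s, b <- s]).
- by rewrite big_allpairs.
- apply: allpairs_uniq => //.
  by move=> [a b] [a' b'] _ _ /= [-> ->].
- by move=> [a b]; rewrite mulr_ge0.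
- move=> [a b] /= hab; rewrite ps ?mulr0 //.
  apply: contraNT hab; rewrite negb_or !negbK => /andP[ha hb].
  exact: (allpairs_f pair ha hb).
Qed.

Lemma coup_to_f m n p : pmeas s m -> pmeas s n -> is_coupling m n p ->
  fcoup s m n p /\ transport_cost d p = (fcost d s p)%:E.
Proof.
case=> m0 ms _ [n0 ns _] [p0 [pm pn]].
have pa : forall a b, a \notin s -> p a b = 0.
  move=> a b ha; apply/eqP; rewrite eq_le p0 andbT.
  have := @esum_term _ (p a) b (p0 a).
  by rewrite pm ms // lee_fin.
have pb : forall a b, b \notin s -> p a b = 0.
  move=> a b hb; apply/eqP; rewrite eq_le p0 andbT.
  have := @esum_term _ (fun u => p u b) a (fun u => p0 u b).
  by rewrite pn ns // lee_fin.
split; last first.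
  apply: cost_seq => // a b /orP[]; [exact: pa|exact: pb].
split.
- by move=> a b _ _; apply: p0.
- move=> a _; have := pm a; rewrite (@esum_seq _ s) //.
  + by case.
  + by move=> b; apply: pb.
- move=> b _; have := pn b; rewrite (@esum_seq _ s (fun u => p u b)) //.
  + by case.
  + by move=> a; apply: pa.
Qed.

Lemma f_to_coup m n p : pmeas s m -> pmeas s n -> fcoup s m n p ->
  is_coupling m n (ext s p) /\ transport_cost d (ext s p) = (fcost d s p)%:E.
Proof.
case=> m0 ms _ [n0 ns _] [p0 pm pn].
have e0 : forall a b, 0 <= ext s p a b.
  by move=> a b; rewrite /ext; case: ifPn => // /andP[ha hb]; apply: p0.
have es : forall a b, (a \notin s) || (b \notin s) -> ext s p a b = 0.
  by move=> a b; rewrite /ext -negb_and => /negPf ->.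
split; last first.
  rewrite cost_seq //; congr (_%:E); apply: eq_big_seq => a ha.
  apply: eq_big_seq => b hb; by rewrite /ext ha hb.
split; first exact: e0.
split.
- move=> a; rewrite (@esum_seq _ s (ext s p a)) //; last first.
    by move=> b hb; apply: es; rewrite hb orbT.
  case: (boolP (a \in s)) => ha.
    by rewrite -pm //; congr (_%:E); apply: eq_big_seq => b hb; rewrite /ext ha hb.
  rewrite ms // big1_seq // => b _; apply: es; by rewrite ha.
- move=> b; rewrite (@esum_seq _ s (fun a => ext s p a b)) //; last first.
    by move=> a ha; apply: es; rewrite ha.
  case: (boolP (b \in s)) => hb.
    by rewrite -pn //; congr (_%:E); apply: eq_big_seq => a ha; rewrite /ext ha hb.
  rewrite ns // big1_seq // => a _; apply: es; by rewrite hb orbT.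
Qed.

Lemma fcost_ge0 m n p : fcoup s m n p -> 0 <= fcost d s p.
Proof.
case=> p0 _ _; rewrite /fcost; apply: sumr_ge0_seq => a ha.
by apply: sumr_ge0_seq => b hb; rewrite mulr_ge0 // p0.
Qed.

Lemma prod_coup m n : pmeas s m -> pmeas s n -> fcoup s m n (fun a b => m a * n b).
Proof.
case=> m0 ms m1 [n0 ns n1]; split.
- by move=> a b _ _; rewrite mulr_ge0.
- by move=> a _; rewrite -mulr_sumr n1 mulr1.
- by move=> b _; rewrite -mulr_suml m1 mul1r.
Qed.

Lemma W_fin m n : pmeas s m -> pmeas s n ->
  W1 d m n = (fine (W1 d m n))%:E /\ 0 <= fine (W1 d m n).
Proof.
move=> hm hn.
have h0 : (0 <= W1 d m n)%E.
  apply: le_ereal_inf_tmp => z [q hq <-].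
  have [hf ->] := coup_to_f hm hn hq.
  by rewrite lee_fin; apply: fcost_ge0 hf.
have h1 : (W1 d m n <= (fcost d s (fun a b => m a * n b))%:E)%E.
  have [hc hcost] := f_to_coup hm hn (prod_coup hm hn).
  rewrite -hcost; apply: ereal_inf_lbound; by exists (ext s (fun a b => m a * n b)).
have hf : W1 d m n \is a fin_num.
  by rewrite ge0_fin_numE // (le_lt_trans h1) // ltry.
split; first by rewrite fineK.
by rewrite -lee_fin fineK.
Qed.

Lemma W_le m n p : pmeas s m -> pmeas s n -> fcoup s m n p ->
  fine (W1 d m n) <= fcost d s p.
Proof.
move=> hm hn hp; rewrite -lee_fin -(W_fin hm hn).1.
have [hc <-] := f_to_coup hm hn hp.
by apply: ereal_inf_lbound; exists (ext s p).
Qed.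

Lemma W_ge m n c : pmeas s m -> pmeas s n ->
  (forall p, fcoup s m n p -> c <= fcost d s p) -> c <= fine (W1 d m n).
Proof.
move=> hm hn H; rewrite -lee_fin -(W_fin hm hn).1.
apply: le_ereal_inf_tmp => z [q hq <-].
have [hf ->] := coup_to_f hm hn hq.
by rewrite lee_fin; apply: H.
Qed.

End Fin.

Lemma psum_seq0 (R : numDomainType) (T : eqType) (r : seq T) (F : T -> R) :
  (forall i, i \in r -> 0 <= F i) -> \sum_(i <- r) F i = 0 ->
  forall i, i \in r -> F i = 0.
Proof.
move=> h0 hs i ir.
have : \sum_(j <- r | j \in r) F j == 0 by rewrite -big_seq hs.
rewrite psumr_eq0; last by move=> j; apply: h0.
by move=> /allP /(_ i ir); rewrite ir /= => /eqP.
Qed.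

Section Lip.
Variables (R : realType) (V : choiceType) (s : seq V).
Implicit Types (m n M N : V -> R) (p q : V -> V -> R) (c : V -> V -> R).

Lemma modify (c : V -> V -> R) D m m' n p' :
  (forall a b, a \in s -> b \in s -> 0 <= c a b /\ c a b <= D) ->
  pmeas s m -> pmeas s m' -> pmeas s n -> fcoup s m' n p' ->
  exists p, fcoup s m n p /\
    fcost c s p <= fcost c s p' + D * \sum_(v <- s) `|m v - m' v|.
Proof.
move=> hc [m0 ms m1] [m'0 m's m'1] [n0 ns n1] [p0 pm pn].
pose mn a := Num.min (m a) (m' a).
pose r a := if m' a == 0 then 0 else mn a / m' a.
have r01 : forall a, 0 <= r a /\ r a <= 1.
  move=> a; rewrite /r; case: eqP => [_|/eqP h]; first by lra.
  have hp : 0 < m' a by rewrite lt_def h m'0.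
  rewrite /mn; split.
    by rewrite divr_ge0 // le_min m0 m'0.
  by rewrite ler_pdivrMr // mul1r ge_min lexx orbT.
have rm : forall a, r a * m' a = mn a.
  move=> a; rewrite /r /mn; case: eqP => [h|/eqP h].
    by rewrite h mul0r min_r // m0.
  by rewrite divfK.
pose e a := m a - mn a.
have e0 : forall a, 0 <= e a by move=> a; rewrite /e subr_ge0 ge_min lexx.
have em : forall a, e a <= `|m a - m' a|.
  move=> a; rewrite /e /mn; case: (leP (m a) (m' a)) => h.
    by rewrite subrr normr_ge0.
  by rewrite ler_norm.
pose f b := n b - \sum_(a <- s) r a * p' a b.
have f0 : forall b, b \in s -> 0 <= f b.
  move=> b hb; rewrite /f -pn // -sumrB; apply: sumr_ge0_seq => a ha.
  have := r01 a; have := p0 a b ha hb; nra.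
pose sig := \sum_(a <- s) e a.
have sig0 : 0 <= sig by apply: sumr_ge0_seq => a _.
have sumf : \sum_(b <- s) f b = sig.
  rewrite /f /sig /e sumrB n1 sumrB m1; congr (_ - _).
  rewrite exchange_big /=; apply: eq_big_seq => a ha.
  by rewrite -mulr_sumr pm // rm.
pose q a b := e a * f b / sig.
have q0 : forall a b, b \in s -> 0 <= q a b.
  by move=> a b hb; rewrite /q divr_ge0 // mulr_ge0 // f0.
exists (fun a b => r a * p' a b + q a b); split; first split.
- move=> a b ha hb; rewrite addr_ge0 ?q0 // mulr_ge0 ?p0 //; by case: (r01 a).
- move=> a ha; rewrite big_split /= -mulr_sumr pm // rm.
  rewrite /q -mulr_suml -mulr_sumr sumf.
  have [hs0|hs] := eqVneq sig 0.
    rewrite hs0 invr0 mulr0 addr0.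
    have := psum_seq0 (fun a _ => e0 a) hs0 ha.
    by rewrite /e => /eqP; rewrite subr_eq0 => /eqP.
  by rewrite mulfK // /e /mn addrC subrK.
- move=> b hb; rewrite big_split /=.
  rewrite /q -mulr_suml -mulr_suml -/sig.
  have [hs0|hs] := eqVneq sig 0.
    have := psum_seq0 f0 (etrans sumf hs0) hb.
    by rewrite /f hs0 invr0 mulr0 addr0 => /eqP; rewrite subr_eq0 => /eqP.
  by rewrite mulrAC divff // mul1r /f addrC subrK.
have D0 : 0 <= D.
  case: s hc m1 => [|a s'] hc' m1'; first by rewrite big_nil in m1'; lra.
  have := hc' a a (mem_head _ _) (mem_head _ _); case=> *; lra.
have hQ : \sum_(a <- s) \sum_(b <- s) q a b <= sig.
  under eq_bigr do rewrite /q -mulr_suml -mulr_sumr sumf.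
  rewrite -mulr_suml -mulr_suml -/sig.
  have [->|hs] := eqVneq sig 0; first by rewrite mulr0 mul0r.
  by rewrite mulfK.
apply: (@le_trans _ _ (fcost c s p' + D * \sum_(a <- s) \sum_(b <- s) q a b)).
  rewrite /fcost mulr_sumr -big_split /=; apply: ler_sum_seq => a ha.
  rewrite mulr_sumr -big_split; apply: ler_sum_seq => b hb /=.
  have [hc0 hcD] := hc a b ha hb.
  rewrite mulrDr; apply: lerD.
    rewrite mulrCA; apply: ler_piMl; first by rewrite mulr_ge0 // p0.
    by case: (r01 a).
  by rewrite ler_wpM2r // q0.
rewrite lerD2l; apply: ler_wpM2l => //.
apply: (le_trans hQ); apply: ler_sum_seq => a _; exact: em.
Qed.


Lemma fcoupT m n p : fcoup s m n p -> fcoup s n m (fun a b => p b a).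
Proof. by case=> h0 h1 h2; split => // a b ha hb; apply: h0. Qed.

Lemma fcostT c p : fcost c s p = fcost (fun a b => c b a) s (fun a b => p b a).
Proof. by rewrite /fcost exchange_big. Qed.

Lemma fcost_lin c (al be : R) p q :
  fcost c s (fun a b => al * p a b + be * q a b) = al * fcost c s p + be * fcost c s q.
Proof.
rewrite /fcost !mulr_sumr -big_split; apply: eq_bigr => a _.
rewrite !mulr_sumr -big_split; apply: eq_bigr => b _ /=; ring.
Qed.

Lemma mix_coup (lam : R) m n p (m0 n0 : V -> R) (p0 : V -> V -> R) M N :
  fcoup s m n p -> fcoup s m0 n0 p0 -> 0 <= lam -> lam <= 1 ->
  (forall v, M v = lam * m v + (1 - lam) * m0 v) ->
  (forall v, N v = lam * n v + (1 - lam) * n0 v) ->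
  fcoup s M N (fun a b => lam * p a b + (1 - lam) * p0 a b).
Proof.
move=> [h0 h1 h2] [k0 k1 k2] l0 l1 hM hN; split.
- move=> a b ha hb; rewrite addr_ge0 // mulr_ge0 ?h0 ?k0 //; lra.
- by move=> a ha; rewrite big_split /= -!mulr_sumr h1 // k1 // hM.
- by move=> b hb; rewrite big_split /= -!mulr_sumr h2 // k2 // hN.
Qed.

Variable d : V -> V -> R.
Hypothesis us : uniq s.
Hypothesis d0 : forall a b, 0 <= d a b.

Lemma weak_dual m n p y : fcoup s m n p ->
  (forall a b, d a y <= d a b + d b y) ->
  \sum_(a <- s) d a y * m a - \sum_(b <- s) d b y * n b <= fcost d s p.
Proof.
move=> [p0 pm pn] tri.
have e1 : \sum_(a <- s) d a y * m a = \sum_(a <- s) \sum_(b <- s) d a y * p a b.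
  by apply: eq_big_seq => a ha; rewrite -pm // mulr_sumr.
have e2 : \sum_(b <- s) d b y * n b = \sum_(a <- s) \sum_(b <- s) d b y * p a b.
  by rewrite exchange_big; apply: eq_big_seq => b hb; rewrite -pn // mulr_sumr.
rewrite e1 e2 -sumrB; apply: ler_sum_seq => a ha; rewrite -sumrB.
apply: ler_sum_seq => b hb; rewrite -mulrBl; apply: ler_wpM2r; first exact: p0.
have := tri a b; lra.
Qed.

Variable D : R.
Hypothesis dD : forall a b, a \in s -> b \in s -> d a b <= D.

Lemma W_step1 m m' n : pmeas s m -> pmeas s m' -> pmeas s n ->
  fine (W1 d m n) <= fine (W1 d m' n) + D * \sum_(v <- s) `|m v - m' v|.
Proof.
move=> hm hm' hn; rewrite -lerBlDr; apply: (W_ge us d0 hm' hn) => p' hp'.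
have [p [hp hc]] := @modify d D m m' n p' (fun a b ha hb => conj (d0 a b) (dD ha hb))
   hm hm' hn hp'.
have := W_le us d0 hm hn hp; lra.
Qed.

Lemma W_step2 m n n' : pmeas s m -> pmeas s n -> pmeas s n' ->
  fine (W1 d m n) <= fine (W1 d m n') + D * \sum_(v <- s) `|n v - n' v|.
Proof.
move=> hm hn hn'; rewrite -lerBlDr; apply: (W_ge us d0 hm hn') => p' hp'.
have [p1 [hp1 hc]] := @modify (fun a b => d b a) D n n' m (fun a b => p' b a)
   (fun a b ha hb => conj (d0 b a) (dD hb ha)) hn hn' hm (fcoupT hp').
have hp := fcoupT hp1.
have := W_le us d0 hm hn hp.
rewrite (fcostT d p') (fcostT d (fun a b => p1 b a)) /=; lra.
Qed.

Lemma W_lip m n m' n' : pmeas s m -> pmeas s n -> pmeas s m' -> pmeas s n' ->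
  `|fine (W1 d m n) - fine (W1 d m' n')| <=
    D * (\sum_(v <- s) `|m v - m' v| + \sum_(v <- s) `|n v - n' v|).
Proof.
move=> hm hn hm' hn'.
have sm : \sum_(v <- s) `|m' v - m v| = \sum_(v <- s) `|m v - m' v|.
  by apply: eq_bigr => v _; rewrite distrC.
have sn : \sum_(v <- s) `|n' v - n v| = \sum_(v <- s) `|n v - n' v|.
  by apply: eq_bigr => v _; rewrite distrC.
have h1 := W_step1 hm hm' hn.
have h2 := W_step2 hm' hn hn'.
have h3 := W_step1 hm' hm hn'.
have h4 := W_step2 hm hn' hn.
rewrite sm in h3; rewrite sn in h4.
rewrite ler_norml; apply/andP; split; lra.
Qed.

End Lip.

Lemma deriv_bound (R : realType) (V : choiceType) (mu : V -> R -> V -> R) z v :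
  time_analytic mu -> exists A : R, exists2 tau : R, 0 < tau & exists K : R,
    forall t, 0 <= t <= tau -> `|mu z t v - mu z 0 v - A * t| <= K * t ^+ 2.
Proof.
move=> /(_ z v) [del [del0 [f [an agree]]]].
have [|r [r0 [a conv]]] := an 0; first by apply/andP; split; lra.
have [tau tau0 [K hK]] := series_bound r0 conv.
have f0 : f 0 = a 0%N.
  have := hK 0; rewrite lexx ltW //= mulr0 subr0 expr0n /= mulr0.
  by move=> /(_ isT); rewrite normr_le0 subr_eq0 => /eqP.
exists (a 1%N); exists (Num.min tau 1); first by rewrite lt_min tau0 ltr01.
exists K => t /andP[t0 tt].
have [tt1 tt2] : t <= tau /\ t <= 1 by move: tt; rewrite le_min => /andP[].
rewrite -agree ?t0 ?tt2 // -agree ?lexx ?ler01 // f0.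
by apply: hK; rewrite t0 tt1.
Qed.

Lemma common (R : realType) (T : eqType) (r : seq T) (P : T -> R -> R -> Prop) :
  (forall v tau K tau' K', P v tau K -> 0 < tau' -> tau' <= tau -> K <= K' -> P v tau' K') ->
  (forall v, exists2 tau, 0 < tau & exists K, P v tau K) ->
  exists2 tau, 0 < tau & exists2 K, 0 <= K & forall v, v \in r -> P v tau K.
Proof.
move=> mono ex; elim: r => [|v r [tau2 t2 [K2 K20 h2]]].
  by exists 1 => //; exists 0 => //.
have [tau1 t1 [K1 h1]] := ex v.
exists (Num.min tau1 tau2); first by rewrite lt_min t1 t2.
exists (Num.max K1 K2); first by rewrite le_max K20 orbT.
move=> u; rewrite in_cons => /orP[/eqP->|hu].
  by apply: mono h1 _ _ _; rewrite ?lt_min ?t1 ?t2 ?ge_min ?lexx ?le_max ?lexx.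
by apply: mono (h2 u hu) _ _ _; rewrite ?lt_min ?t1 ?t2 ?ge_min ?lexx ?orbT ?le_max ?lexx ?orbT.
Qed.

Lemma ge0_of (R : realType) (tau K A : R) : 0 < tau -> 0 <= K ->
  (forall t, 0 < t -> t <= tau -> - (K * t) <= A) -> 0 <= A.
Proof.
move=> tau0 K0 h; rewrite leNgt; apply/negP => A0.
pose t := Num.min tau (- A / (K + 1)).
have hK1 : 0 < K + 1 by lra.
have t0 : 0 < t by rewrite lt_min tau0 divr_gt0 //; lra.
have ttau : t <= tau by rewrite ge_min lexx.
have tA : t <= - A / (K + 1) by rewrite ge_min lexx orbT.
have := h t t0 ttau.
have : t * (K + 1) <= - A by rewrite -ler_pdivlMr.
nra.
Qed.

Lemma eq0_of (R : realType) (tau K c : R) : 0 < tau -> 0 <= K ->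
  (forall t, 0 < t -> t <= tau -> `|c| <= K * t) -> c = 0.
Proof.
move=> tau0 K0 h.
have : 0 <= - `|c| by apply: (ge0_of tau0 K0) => t t0 tt; have := h t t0 tt; lra.
by rewrite oppr_ge0 normr_le0 => /eqP.
Qed.

Lemma sum_delta (R : realType) (T : eqType) (r : seq T) (F : T -> R) x :
  uniq r -> x \in r -> \sum_(v <- r) F v * (if v == x then 1 else 0) = F x.
Proof.
move=> ur xr; rewrite (bigD1_seq x) //= eqxx mulr1 big1 ?addr0 //.
by move=> v /negPf ->; rewrite mulr0.
Qed.

Lemma le_sum_term (R : realType) (T : eqType) (r : seq T) (F : T -> R) x :
  uniq r -> x \in r -> (forall v, v \in r -> 0 <= F v) -> F x <= \sum_(v <- r) F v.
Proof.
move=> ur xr h; rewrite (bigD1_seq x) //= lerDl big_seq_cond sumr_ge0 //.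
by move=> v /andP[vr _]; apply: h.
Qed.

Lemma pmeas_of (R : realType) (V : choiceType) (s : seq V) (m : V -> R) :
  uniq s -> prob_measure m -> (forall v, v \notin s -> m v = 0) -> pmeas s m.
Proof.
move=> us [m0 m1] ms; split => //.
by move: m1; rewrite (esum_seq us m0 ms) => -[].
Qed.

Lemma lin_ge (R : realType) (K A t m : R) : 0 < t -> 0 <= m ->
  `|m - A * t| <= K * t ^+ 2 -> - (K * t) <= A.
Proof.
move=> t0 m0; rewrite ler_norml => /andP[_ h].
rewrite -(ler_pM2r t0); rewrite expr2 in h; nra.
Qed.

Lemma sum_lin (R : realType) (T : eqType) (r : seq T) (m0 m1 A : T -> R) (K t : R) :
  0 < t -> \sum_(v <- r) m1 v = \sum_(v <- r) m0 v ->
  (forall v, v \in r -> `|m1 v - m0 v - A v * t| <= K * t ^+ 2) ->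
  `|\sum_(v <- r) A v| <= (\sum_(v <- r) K) * t.
Proof.
move=> t0 hs h.
have e : (\sum_(v <- r) A v) * t =
   - \sum_(v <- r) (m1 v - m0 v - A v * t).
  rewrite !sumrB hs mulr_suml; ring.
rewrite -(ler_pM2r t0).
have -> : `|\sum_(v <- r) A v| * t = `|(\sum_(v <- r) A v) * t|.
  by rewrite normrM (gtr0_norm t0).
rewrite e normrN.
apply: (le_trans (ler_norm_sum _ _ _)).
rewrite -mulrA -expr2 mulr_suml; apply: ler_sum_seq => v hv; exact: h.
Qed.

Definition line (R : realType) (V : choiceType) (s : seq V) (m0 A : V -> R) (t : R) (v : V) :=
  if v \in s then m0 v + t * A v else 0.

Lemma line_pmeas (R : realType) (V : choiceType) (s : seq V) (m0 A : V -> R) t :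
  pmeas s m0 -> (forall v, v \in s -> 0 <= m0 v + t * A v) ->
  \sum_(v <- s) A v = 0 -> pmeas s (line s m0 A t).
Proof.
move=> [_ _ m1] h0 hA; split.
- by move=> v; rewrite /line; case: ifP => // /h0.
- by move=> v; rewrite /line => /negPf ->.
- rewrite (eq_big_seq (fun v => m0 v + t * A v)); last first.
    by move=> v hv; rewrite /line hv.
  by rewrite big_split /= m1 -mulr_sumr hA mulr0 addr0.
Qed.

Lemma line_mix (R : realType) (V : choiceType) (s : seq V) (m0 A : V -> R) t t' v :
  0 < t -> line s m0 A t' v = t' / t * line s m0 A t v + (1 - t' / t) * line s m0 A 0 v.
Proof.
move=> t0; rewrite /line; case: ifP => _; last by rewrite !mulr0 addr0.
by field; rewrite gt_eqF.
Qed.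

Lemma line0 (R : realType) (V : choiceType) (s : seq V) (m0 A : V -> R) v :
  v \in s -> line s m0 A 0 v = m0 v.
Proof. by move=> hv; rewrite /line hv mul0r addr0. Qed.

Unset Implicit Arguments.

Theorem mainTheorem8 (R : realType) (V : choiceType) (E : V -> V -> Prop)
    (d : V -> V -> R) (mu : V -> R -> V -> R) :
  locally_finite_graph E -> is_distance d -> d_complete d ->
  random_walk d mu -> local_walk mu -> time_analytic mu ->
  forall x y : V, x <> y ->
    exists L : R, ORic_eps d mu eps x y / eps @[eps --> 0^'+] --> L.
Proof.
move=> _ [d0 [dE [dsym dtri]]] _ rw loc tan x y xy.
have [Kx [fKx hKx]] := loc x.
have [Ky [fKy hKy]] := loc y.
have [sx ex] := (finite_seqP Kx).1 fKx.
have [sy ey] := (finite_seqP Ky).1 fKy.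
pose s := undup (x :: y :: sx ++ sy).
have us : uniq s by apply: undup_uniq.
have xs : x \in s by rewrite mem_undup in_cons eqxx.
have ys : y \in s by rewrite mem_undup !in_cons eqxx orbT.
have suppx : forall t, 0 <= t <= 1 -> forall v, v \notin s -> mu x t v = 0.
  move=> t ht v; apply: contraNeq => hne.
  have := hKx t ht v hne; rewrite ex /= => hv.
  by rewrite mem_undup !in_cons mem_cat hv !orbT.
have suppy : forall t, 0 <= t <= 1 -> forall v, v \notin s -> mu y t v = 0.
  move=> t ht v; apply: contraNeq => hne.
  have := hKy t ht v hne; rewrite ey /= => hv.
  by rewrite mem_undup !in_cons mem_cat hv !orbT.
have [rwx0 [_ rwx1]] := rw x.
have [rwy0 [_ rwy1]] := rw y.
have pmx : forall t, 0 <= t <= 1 -> pmeas s (mu x t).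
  by move=> t ht; apply: pmeas_of => //; [case: (rwx0 t ht)|apply: suppx].
have pmy : forall t, 0 <= t <= 1 -> pmeas s (mu y t).
  by move=> t ht; apply: pmeas_of => //; [case: (rwy0 t ht)|apply: suppy].
have i01 : 0 <= (0:R) <= 1 by rewrite lexx ler01.
have mono : forall z, forall (A : V -> R) v tau K tau' K',
  (forall t, 0 <= t <= tau -> `|mu z t v - mu z 0 v - A v * t| <= K * t ^+ 2) ->
  0 < tau' -> tau' <= tau -> K <= K' ->
  (forall t, 0 <= t <= tau' -> `|mu z t v - mu z 0 v - A v * t| <= K' * t ^+ 2).
  move=> z A v tau K tau' K' h _ tt KK t /andP[t0 t1].
  apply: (le_trans (h t _)); first by rewrite t0 (le_trans t1 tt).
  by apply: ler_wpM2r => //; apply: exprn_ge0.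
have [Ax hAx] := boolp.choice (fun v => @deriv_bound R V mu x v tan).
have [Ay hAy] := boolp.choice (fun v => @deriv_bound R V mu y v tan).
have [taux taux0 [Kx' Kx0 hx]] := @common R V s
   (fun v tau K => forall t, 0 <= t <= tau -> `|mu x t v - mu x 0 v - Ax v * t| <= K * t ^+ 2)
   (fun v tau K tau' K' h => mono x Ax v tau K tau' K' h) hAx.
have [tauy tauy0 [Ky' Ky0 hy]] := @common R V s
   (fun v tau K => forall t, 0 <= t <= tau -> `|mu y t v - mu y 0 v - Ay v * t| <= K * t ^+ 2)
   (fun v tau K tau' K' h => mono y Ay v tau K tau' K' h) hAy.
pose K := Num.max Kx' Ky'.
have K0 : 0 <= K by rewrite le_max Kx0.
pose t0 := Num.min (Num.min taux tauy) (Num.min 1 (1 / (1 + `|Ax x| + `|Ay y|))).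
have hden : 0 < 1 + `|Ax x| + `|Ay y|.
  by have := normr_ge0 (Ax x); have := normr_ge0 (Ay y); lra.
have t00 : 0 < t0 by rewrite !lt_min taux0 tauy0 ltr01 divr_gt0.
have t0x : t0 <= taux by rewrite !ge_min lexx.
have t0y : t0 <= tauy by rewrite !ge_min lexx orbT.
have t01 : t0 <= 1 by rewrite !ge_min lexx orbT.
have t0A : t0 <= 1 / (1 + `|Ax x| + `|Ay y|) by rewrite !ge_min lexx !orbT.
have t0Ax : t0 * `|Ax x| <= 1.
  have := t0A; rewrite ler_pdivlMr // => h.
  have : 0 <= t0 * `|Ay y| by rewrite mulr_ge0 // ltW.
  have : 0 <= t0 by apply: ltW.
  nra.
have t0Ay : t0 * `|Ay y| <= 1.
  have := t0A; rewrite ler_pdivlMr // => h.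
  have : 0 <= t0 * `|Ax x| by rewrite mulr_ge0 // ltW.
  have : 0 <= t0 by apply: ltW.
  nra.
have bx : forall t v, 0 <= t <= t0 -> v \in s ->
    `|mu x t v - mu x 0 v - Ax v * t| <= K * t ^+ 2.
  move=> t v /andP[ta tb] hv.
  apply: (le_trans (hx v hv t _)); first by rewrite ta (le_trans tb).
  by apply: ler_wpM2r; [apply: exprn_ge0|rewrite le_max lexx].
have by_ : forall t v, 0 <= t <= t0 -> v \in s ->
    `|mu y t v - mu y 0 v - Ay v * t| <= K * t ^+ 2.
  move=> t v /andP[ta tb] hv.
  apply: (le_trans (hy v hv t _)); first by rewrite ta (le_trans tb).
  by apply: ler_wpM2r; [apply: exprn_ge0|rewrite le_max lexx orbT].
have it : forall t, 0 < t -> t <= t0 -> 0 <= t <= 1.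
  by move=> t ta tb; rewrite ltW // (le_trans tb).
have it0 : forall t, 0 < t -> t <= t0 -> 0 <= t <= t0.
  by move=> t h1 h2; rewrite ltW.
have Axpos : forall v, v \in s -> v != x -> 0 <= Ax v.
  move=> v hv vx; apply: (ge0_of t00 K0) => t ta tb.
  apply: (@lin_ge R K (Ax v) t (mu x t v)) => //; first by case: (pmx t (it t ta tb)).
  have := bx t v (it0 t ta tb) hv.
  by rewrite rwx1 (negPf vx) subr0.
have Aypos : forall v, v \in s -> v != y -> 0 <= Ay v.
  move=> v hv vy; apply: (ge0_of t00 K0) => t ta tb.
  apply: (@lin_ge R K (Ay v) t (mu y t v)) => //; first by case: (pmy t (it t ta tb)).
  have := by_ t v (it0 t ta tb) hv.
  by rewrite rwy1 (negPf vy) subr0.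
have sK0 : 0 <= \sum_(v <- s) K by apply: sumr_ge0_seq.
have sAx : \sum_(v <- s) Ax v = 0.
  apply: (eq0_of t00 sK0) => t ta tb; apply: (@sum_lin R V s (mu x 0) (mu x t) Ax K t ta).
    by case: (pmx t (it t ta tb)) => _ _ ->; case: (pmx 0 i01) => _ _ ->.
  by move=> v hv; apply: bx => //; apply: it0.
have sAy : \sum_(v <- s) Ay v = 0.
  apply: (eq0_of t00 sK0) => t ta tb; apply: (@sum_lin R V s (mu y 0) (mu y t) Ay K t ta).
    by case: (pmy t (it t ta tb)) => _ _ ->; case: (pmy 0 i01) => _ _ ->.
  by move=> v hv; apply: by_ => //; apply: it0.
pose lx := line s (mu x 0) Ax.
pose ly := line s (mu y 0) Ay.
have lpx : forall t, 0 <= t <= t0 -> pmeas s (lx t).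
  move=> t /andP[ta tb]; apply: line_pmeas => //; first exact: pmx.
  move=> v hv; rewrite rwx1; case: eqP => [->|/eqP vx].
    have : t * `|Ax x| <= 1 by apply: le_trans t0Ax; apply: ler_wpM2r.
    have : - (t * `|Ax x|) <= t * Ax x.
      by rewrite -mulrN; apply: ler_wpM2l => //; rewrite lerNl ler_normr lexx orbT.
    lra.
  by rewrite add0r mulr_ge0 // Axpos.
have lpy : forall t, 0 <= t <= t0 -> pmeas s (ly t).
  move=> t /andP[ta tb]; apply: line_pmeas => //; first exact: pmy.
  move=> v hv; rewrite rwy1; case: eqP => [->|/eqP vy].
    have : t * `|Ay y| <= 1 by apply: le_trans t0Ay; apply: ler_wpM2r.
    have : - (t * `|Ay y|) <= t * Ay y.
      by rewrite -mulrN; apply: ler_wpM2l => //; rewrite lerNl ler_normr lexx orbT.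
    lra.
  by rewrite add0r mulr_ge0 // Aypos.
have Dxy0 : 0 < d x y.
  rewrite lt_def d0 andbT; apply/eqP => h; exact: xy ((dE x y).1 h).
have dyy : d y y = 0 by apply/(dE y y).2.
pose D := \sum_(a <- s) \sum_(b <- s) d a b.
have dD : forall a b, a \in s -> b \in s -> d a b <= D.
  move=> a b ha hb; apply: (le_trans _ (le_sum_term us ha _)).
    by apply: le_sum_term.
  by move=> v _; apply: sumr_ge0_seq.
have D0 : 0 <= D by apply: le_trans (dD x x xs xs).
pose psi t := fine (W1 d (lx t) (ly t)).
pose phi t := fine (W1 d (mu x t) (mu y t)).
pose c0 := \sum_(v <- s) d v y * Ax v - \sum_(v <- s) d v y * Ay v.
have lxE : forall t a, a \in s -> lx t a = (if a == x then 1 else 0) + t * Ax a.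
  by move=> t a ha; rewrite /lx /line ha rwx1.
have lyE : forall t a, a \in s -> ly t a = (if a == y then 1 else 0) + t * Ay a.
  by move=> t a ha; rewrite /ly /line ha rwy1.
have lowb : forall t, 0 <= t <= t0 -> d x y + t * c0 <= psi t.
  move=> t ht; apply: (W_ge us d0 (lpx t ht) (lpy t ht)) => p hp.
  apply: le_trans (weak_dual hp (fun a b => dtri a b y)).
  have e1 : \sum_(a <- s) d a y * lx t a = d x y + t * \sum_(a <- s) d a y * Ax a.
    rewrite (eq_big_seq (fun a => d a y * (if a == x then 1 else 0) + t * (d a y * Ax a))).
      by rewrite big_split /= sum_delta // mulr_sumr.
    by move=> a ha; rewrite lxE //; ring.
  have e2 : \sum_(a <- s) d a y * ly t a = d y y + t * \sum_(a <- s) d a y * Ay a.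
    rewrite (eq_big_seq (fun a => d a y * (if a == y then 1 else 0) + t * (d a y * Ay a))).
      by rewrite big_split /= sum_delta // mulr_sumr.
    by move=> a ha; rewrite lyE //; ring.
  rewrite e1 e2 dyy /c0; lra.
have i00 : 0 <= (0:R) <= t0 by rewrite lexx ltW.
pose pd := fun a b => lx 0 a * ly 0 b.
have hpd : fcoup s (lx 0) (ly 0) pd := prod_coup (lpx 0 i00) (lpy 0 i00).
have cpd : fcost d s pd = d x y.
  rewrite /fcost (eq_big_seq (fun a => d a y * (if a == x then 1 else 0))).
    by rewrite sum_delta.
  move=> a ha.
  rewrite (eq_big_seq (fun b => (d a b * (if a == x then 1 else 0)) * (if b == y then 1 else 0))).
    by rewrite sum_delta.
  by move=> b hb; rewrite /pd lxE // lyE // !mul0r !addr0 mulrA.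
have convex : forall s' t, 0 < s' -> s' <= t -> t <= t0 ->
    psi s' <= s' / t * psi t + (1 - s' / t) * d x y.
  move=> s' t s0 st tt.
  have t0' : 0 < t by apply: lt_le_trans st.
  have hs' : 0 <= s' <= t0 by rewrite ltW // (le_trans st).
  have ht : 0 <= t <= t0 by rewrite ltW.
  have lam0 : 0 < s' / t by rewrite divr_gt0.
  have lam1 : s' / t <= 1 by rewrite ler_pdivrMr // mul1r.
  have H : (psi s' - (1 - s' / t) * d x y) / (s' / t) <= psi t.
    apply: (W_ge us d0 (lpx t ht) (lpy t ht)) => p hp.
    have hm := mix_coup hp hpd (ltW lam0) lam1
      (fun v => line_mix s (mu x 0) Ax s' v t0') (fun v => line_mix s (mu y 0) Ay s' v t0').
    have := W_le us d0 (lpx s' hs') (lpy s' hs') hm.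
    rewrite fcost_lin cpd -/(psi s') => h.
    rewrite ler_pdivrMr //; lra.
  move: H; rewrite ler_pdivrMr //; lra.
have qmono : forall s' t, 0 < s' -> s' <= t -> t <= t0 ->
    (psi s' - d x y) / s' <= (psi t - d x y) / t.
  move=> s' t s0 st tt.
  have t0' : 0 < t by apply: lt_le_trans st.
  have := convex s' t s0 st tt.
  rewrite ler_pdivrMr // => h.
  have -> : (psi t - d x y) / t * s' = s' / t * (psi t - d x y) by ring.
  lra.
pose C := D * (\sum_(v <- s) K + \sum_(v <- s) K).
have lip : forall t, 0 <= t <= t0 -> `|phi t - psi t| <= C * t ^+ 2.
  move=> t ht.
  have ht1 : 0 <= t <= 1 by case/andP: ht => a b; rewrite a (le_trans b).
  apply: (le_trans (W_lip us d0 dD (pmx t ht1) (pmy t ht1) (lpx t ht) (lpy t ht))).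
  rewrite /C -mulrA; apply: ler_wpM2l => //.
  rewrite mulrDl; apply: lerD; rewrite mulr_suml; apply: ler_sum_seq => v hv.
    by rewrite lxE // -rwx1 opprD addrA (mulrC t); apply: bx.
  by rewrite lyE // -rwy1 opprD addrA (mulrC t); apply: by_.
pose q t := (psi t - d x y) / t.
pose g t := (phi t - d x y) / t.
pose L0 := inf [set q t | t in [set` Interval (BRight (0:R)) (BRight t0)]].
have hq : q t @[t --> 0^'+] --> L0.
  apply: nondecreasing_at_right_cvgr.
  - by rewrite bnd_simp.
  - move=> a b; rewrite !in_itv /= => /andP[a0 at0] /andP[b0 bt0] ab.
    by apply: qmono.
  - exists c0 => z [t]; rewrite /= in_itv /= => /andP[t0' tt] <-.
    rewrite /q ler_pdivlMr //; have := lowb t (it0 t t0' tt); lra.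
have hg : g t @[t --> 0^'+] --> L0.
  have hid : (fun t : R => t) @ 0^'+ --> (0:R) by apply: cvg_at_right_filter; exact: cvg_id.
  apply: (@squeeze_cvgr _ _ _ _ (fun t => q t - C * t) (fun t => q t + C * t)).
  - near=> t.
    have tpos : 0 < t by near: t; apply: nbhs_right_gt.
    have tle : t <= t0 by near: t; apply: nbhs_right_le.
    have hgq : `|g t - q t| <= C * t.
      rewrite (_ : g t - q t = (phi t - psi t) / t); last by rewrite /g /q; ring.
      rewrite normrM normfV (gtr0_norm tpos) ler_pdivrMr // -mulrA -expr2.
      exact: lip t (it0 t tpos tle).
    by move: hgq; rewrite ler_distl.
  - have h1 : C * t @[t --> 0^'+] --> C * 0 by apply: cvgMr.
    have := cvgB hq h1; rewrite mulr0 subr0; exact.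
  - have h1 : C * t @[t --> 0^'+] --> C * 0 by apply: cvgMr.
    have := cvgD hq h1; rewrite mulr0 addr0; exact.
exists (- L0 / d x y).
have hD : d x y != 0 by rewrite gt_eqF.
have -> : (fun eps => ORic_eps d mu eps x y / eps) = (fun eps => - g eps / d x y).
  apply/funext => e; rewrite /ORic_eps -/(phi e) /g.
  rewrite -[X in (X - _) / _](divff hD) -mulrBl; ring.
by apply: cvgMl; apply: cvgN.
Unshelve. all: end_near.
Qed.
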